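(* Let $M\ge2$ and $\bar\sigma>0$. Observe $\mathbf y=\mathbf f+\boldsymbol\xi\in\mathbf R^n$, where $\xi_1,\dots,\xi_n$ are i.i.d., centered with variance $\sigma^2$, and satisfy, for all $\mathbf b\in\mathbf R^n$, all $n\times n$ real matrices $B$ and all $x>0$, \[\mathbb P\big(\boldsymbol\xi^T\mathbf b>\bar\sigma\|\mathbf b\|_2\sqrt{2x}\big)\le e^{-x},\qquad \mathbb P\big(\boldsymbol\xi^TB\boldsymbol\xi-\sigma^2\mathrm{Tr}B>2\sigma\bar\sigma\|B\|_F\sqrt x+2\bar\sigma^2\|B\|_{op}x\big)\le e^{-x}.\] For $j=1,\dots,M$ let $\hat{\boldsymbol\mu}_j=A_j\mathbf y+\mathbf b_j$ with deterministic $n\times n$ matrices with $\|A_j\|_{op}\le1$ and deterministic $\mathbf b_j\in\mathbf R^n$. Let $\hat{\boldsymbol\theta}_{\mathrm{pen}}\in\arg\min_{\boldsymbol\theta\in\Lambda^M}H_{\mathrm{pen}}(\boldsymbol\theta)$. Then for all $x>0$, with probability at least $1-2e^{-x}$, \[\|\hat{\boldsymbol\mu}_{\hat{\boldsymbol\theta}_{\mathrm{pen}}}-\mathbf f\|_2^2\le\min_{j=1,\dots,M}\|\hat{\boldsymbol\mu}_j-\mathbf f\|_2^2+46\bar\sigma^2(2\log M+x).\]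
   Context: $\|\cdot\|_F$ Frobenius norm, $\|\cdot\|_{op}$ operator norm. $\Lambda^M=\{\boldsymbol\theta\in\mathbf R^M:\sum_j\theta_j=1,\theta_j\ge0\}$. For $\boldsymbol\theta\in\Lambda^M$: $A_{\boldsymbol\theta}=\sum_j\theta_jA_j$, $\mathbf b_{\boldsymbol\theta}=\sum_j\theta_j\mathbf b_j$, $\hat{\boldsymbol\mu}_{\boldsymbol\theta}=A_{\boldsymbol\theta}\mathbf y+\mathbf b_{\boldsymbol\theta}$. $C_p(\boldsymbol\theta)=\|\hat{\boldsymbol\mu}_{\boldsymbol\theta}\|_2^2-2\mathbf y^T\hat{\boldsymbol\mu}_{\boldsymbol\theta}+2\sigma^2\mathrm{Tr}(A_{\boldsymbol\theta})$, $\mathrm{pen}(\boldsymbol\theta)=\sum_j\theta_j\|\hat{\boldsymbol\mu}_{\boldsymbol\theta}-\hat{\boldsymbol\mu}_j\|_2^2$, $H_{\mathrm{pen}}=C_p+\tfrac12\mathrm{pen}$. *)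

(* Defs.v *)
From HB Require Import structures.
From mathcomp Require Import all_boot all_order all_algebra.
From mathcomp Require Import all_classical all_reals all_analysis.
Set Implicit Arguments. Unset Strict Implicit. Unset Printing Implicit Defensive.
Import Order.TTheory GRing.Theory Num.Theory.
Import numFieldNormedType.Exports.
Local Open Scope classical_set_scope.
Local Open Scope ring_scope.

Section Defs.
Variable R : realType.

Definition sqnorm2 {n : nat} (v : 'cV[R]_n) : R := \sum_(i < n) v i 0 ^+ 2.
Definition norm2 {n : nat} (v : 'cV[R]_n) : R := Num.sqrt (sqnorm2 v).
Definition dotv {n : nat} (u v : 'cV[R]_n) : R := \sum_(i < n) u i 0 * v i 0.
Definition frobnorm {n : nat} (B : 'M[R]_n) : R :=
  Num.sqrt (\sum_(i < n) \sum_(j < n) B i j ^+ 2).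
Definition opnorm {n : nat} (B : 'M[R]_n) : R :=
  sup [set norm2 (B *m v) | v in [set v : 'cV[R]_n | norm2 v <= 1]].

Definition simplex (M : nat) : set ('I_M -> R) :=
  [set th | \sum_(j < M) th j = 1 /\ forall j, 0 <= th j].

Definition Ath {n M : nat} (A : 'I_M -> 'M[R]_n) (th : 'I_M -> R) : 'M[R]_n :=
  \sum_(j < M) th j *: A j.
Definition bth {n M : nat} (b : 'I_M -> 'cV[R]_n) (th : 'I_M -> R) : 'cV[R]_n :=
  \sum_(j < M) th j *: b j.
Definition muhat {n M : nat} (A : 'I_M -> 'M[R]_n) (b : 'I_M -> 'cV[R]_n)
  (y : 'cV[R]_n) (th : 'I_M -> R) : 'cV[R]_n := Ath A th *m y + bth b th.
Definition muhat_j {n M : nat} (A : 'I_M -> 'M[R]_n) (b : 'I_M -> 'cV[R]_n)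
  (y : 'cV[R]_n) (j : 'I_M) : 'cV[R]_n := A j *m y + b j.

Definition Cp {n M : nat} (sigma : R) (A : 'I_M -> 'M[R]_n) (b : 'I_M -> 'cV[R]_n)
  (y : 'cV[R]_n) (th : 'I_M -> R) : R :=
  sqnorm2 (muhat A b y th) - 2 * dotv y (muhat A b y th) + 2 * sigma ^+ 2 * \tr (Ath A th).
Definition pen {n M : nat} (A : 'I_M -> 'M[R]_n) (b : 'I_M -> 'cV[R]_n)
  (y : 'cV[R]_n) (th : 'I_M -> R) : R :=
  \sum_(j < M) th j * sqnorm2 (muhat A b y th - muhat_j A b y j).
Definition Hpen {n M : nat} (sigma : R) (A : 'I_M -> 'M[R]_n) (b : 'I_M -> 'cV[R]_n)
  (y : 'cV[R]_n) (th : 'I_M -> R) : R :=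
  Cp sigma A b y th + 2^-1 * pen A b y th.

End Defs.
Arguments simplex {R} M.

Section Prob.
Local Open Scope ereal_scope.
Context (R : realType) (d : measure_display) (T : measurableType d).

Definition colv {n : nat} (X : 'I_n -> T -> R) (w : T) : 'cV[R]_n :=
  \col_(i < n) X i w.

Definition mutually_independent (P : probability T R) {n : nat} (X : 'I_n -> T -> R) :=
  forall (S : {set 'I_n}) (B : 'I_n -> set R), (forall i, measurable (B i)) ->
    P (\big[setI/setT]_(i in S) (X i @^-1` B i)) = \prod_(i in S) P (X i @^-1` B i).

Definition identically_distributed (P : probability T R) {n : nat} (X : 'I_n -> T -> R) :=
  forall i j (B : set R), measurable B -> P (X i @^-1` B) = P (X j @^-1` B).
End Prob.

(* Main.v *)
Require Import Defs.
From HB Require Import structures.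
From mathcomp Require Import all_boot all_order all_algebra.
From mathcomp Require Import all_classical all_reals all_analysis.
From mathcomp Require Import measurable_realfun.
From mathcomp Require Import ring lra.
Set Implicit Arguments. Unset Strict Implicit. Unset Printing Implicit Defensive.
Import Order.TTheory GRing.Theory Num.Theory.
Import numFieldNormedType.Exports.
Local Open Scope classical_set_scope.
Local Open Scope ring_scope.

Section Vec.
Variable R : realType.
Variable n : nat.
Implicit Types u v w : 'cV[R]_n.

Lemma dotvC u v : dotv u v = dotv v u.
Proof. by apply: eq_bigr => i _; rewrite mulrC. Qed.
Lemma dotvDr u v w : dotv u (v + w) = dotv u v + dotv u w.
Proof. by rewrite /dotv -big_split; apply: eq_bigr => i _; rewrite mxE mulrDr. Qed.
Lemma dotvDl u v w : dotv (v + w) u = dotv v u + dotv w u.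
Proof. by rewrite dotvC dotvDr !(dotvC u). Qed.
Lemma dotvZr u v (c : R) : dotv u (c *: v) = c * dotv u v.
Proof. by rewrite /dotv mulr_sumr; apply: eq_bigr => i _; rewrite mxE mulrCA. Qed.
Lemma dotvZl u v (c : R) : dotv (c *: v) u = c * dotv v u.
Proof. by rewrite dotvC dotvZr dotvC. Qed.
Lemma dotvNr u v : dotv u (- v) = - dotv u v.
Proof. by rewrite -scaleN1r dotvZr mulN1r. Qed.
Lemma dotvNl u v : dotv (- v) u = - dotv v u.
Proof. by rewrite dotvC dotvNr dotvC. Qed.
Lemma dotvBr u v w : dotv u (v - w) = dotv u v - dotv u w.
Proof. by rewrite dotvDr dotvNr. Qed.
Lemma dotvBl u v w : dotv (v - w) u = dotv v u - dotv w u.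
Proof. by rewrite dotvDl dotvNl. Qed.
Lemma dotv_sumr (I : finType) u (F : I -> 'cV[R]_n) :
  dotv u (\sum_i F i) = \sum_i dotv u (F i).
Proof.
rewrite /dotv exchange_big /=; apply: eq_bigr => i _.
by rewrite summxE mulr_sumr.
Qed.
Lemma dotv_suml (I : finType) u (F : I -> 'cV[R]_n) :
  dotv (\sum_i F i) u = \sum_i dotv (F i) u.
Proof. by rewrite dotvC dotv_sumr; apply: eq_bigr => i _; rewrite dotvC. Qed.
Lemma dotv_mulmx u v (B : 'M[R]_n) : dotv u (B *m v) = dotv (B^T *m u) v.
Proof.
rewrite /dotv.
under eq_bigr => i _ do rewrite mxE mulr_sumr.
under [RHS]eq_bigr => i _ do rewrite mxE mulr_suml.
rewrite exchange_big /=; apply: eq_bigr => i _; apply: eq_bigr => j _.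
by rewrite mxE mulrCA mulrA.
Qed.
Lemma sqnorm2E v : sqnorm2 v = dotv v v.
Proof. by apply: eq_bigr => i _; rewrite expr2. Qed.
Lemma sqnorm2_ge0 v : 0 <= sqnorm2 v.
Proof. by apply: sumr_ge0 => i _; rewrite sqr_ge0. Qed.
Lemma norm2_ge0 v : 0 <= norm2 v.
Proof. exact: sqrtr_ge0. Qed.
Lemma norm2_sq v : norm2 v ^+ 2 = sqnorm2 v.
Proof. by rewrite sqr_sqrtr // sqnorm2_ge0. Qed.
Lemma sqnorm2D u v : sqnorm2 (u + v) = sqnorm2 u + 2 * dotv u v + sqnorm2 v.
Proof. by rewrite !sqnorm2E !dotvDl !dotvDr (dotvC v u); ring. Qed.
Lemma sqnorm2B u v : sqnorm2 (u - v) = sqnorm2 u - 2 * dotv u v + sqnorm2 v.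
Proof. by rewrite !sqnorm2E !dotvBl !dotvBr (dotvC v u); ring. Qed.
Lemma sqnorm2Z (c : R) v : sqnorm2 (c *: v) = c ^+ 2 * sqnorm2 v.
Proof. by rewrite !sqnorm2E dotvZl dotvZr; ring. Qed.

Lemma CS2 u v : dotv u v ^+ 2 <= sqnorm2 u * sqnorm2 v.
Proof.
have [v0|vpos] := eqVneq (sqnorm2 v) 0.
  have: forall i, v i 0 = 0.
    move=> i; apply/eqP; rewrite -sqrf_eq0; apply/eqP.
    move/eqP: v0; rewrite psumr_eq0 => [/allP H|j _]; last exact: sqr_ge0.
    by apply/eqP; apply: H; rewrite mem_index_enum.
  move=> H; rewrite v0 mulr0 /dotv big1 ?expr0n // => i _; by rewrite H mulr0.
have vp : 0 < sqnorm2 v by rewrite lt_neqAle eq_sym vpos sqnorm2_ge0.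
have := sqnorm2_ge0 (u - (dotv u v / sqnorm2 v) *: v).
rewrite sqnorm2B sqnorm2Z dotvZr => H.
have E : dotv u v / sqnorm2 v * dotv u v = dotv u v ^+ 2 / sqnorm2 v.
  by rewrite mulrAC expr2.
move: H; rewrite E.
set a := dotv u v; set b := sqnorm2 v; set c := sqnorm2 u.
have -> : (a / b) ^+ 2 * b = a ^+ 2 / b.
  by field; rewrite gt_eqF.
move=> H.
have -> : a ^+ 2 = a ^+ 2 / b * b by rewrite divfK ?gt_eqF.
rewrite ler_pM2r //; lra.
Qed.

Lemma CS u v : dotv u v <= norm2 u * norm2 v.
Proof.
have := CS2 u v; rewrite -!norm2_sq -exprMn => H.
have h0 : 0 <= norm2 u * norm2 v by rewrite mulr_ge0 // norm2_ge0.
have [|] := lerP (dotv u v) 0; first by move=> h; apply: le_trans h h0.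
move=> hp; rewrite -(ler_pXn2r (_ : (0 < 2)%N)) // ?nnegrE ?ltW //.
Qed.

Lemma norm2_le u (c : R) : 0 <= c -> sqnorm2 u <= c ^+ 2 -> norm2 u <= c.
Proof.
move=> c0 H; rewrite -(ler_pXn2r (_ : (0 < 2)%N)) ?nnegrE ?norm2_ge0 //.
by rewrite norm2_sq.
Qed.

Lemma norm2D u v : norm2 (u + v) <= norm2 u + norm2 v.
Proof.
apply: norm2_le; first by rewrite addr_ge0 // norm2_ge0.
rewrite sqnorm2D -!norm2_sq; have := CS u v; nra.
Qed.
Lemma norm2N u : norm2 (- u) = norm2 u.
Proof. by rewrite /norm2 -scaleN1r sqnorm2Z expr2 mulN1r opprK mul1r. Qed.
Lemma norm2B u v : norm2 (u - v) <= norm2 u + norm2 v.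
Proof. by rewrite -(norm2N v) norm2D. Qed.
Lemma norm2Z (c : R) u : norm2 (c *: u) = `|c| * norm2 u.
Proof. by rewrite /norm2 sqnorm2Z sqrtrM ?sqr_ge0 // sqrtr_sqr. Qed.


Lemma sqnorm2_eq0 v : sqnorm2 v = 0 -> v = 0.
Proof.
move=> /eqP; rewrite psumr_eq0 => [/allP H|j _]; last exact: sqr_ge0.
apply/matrixP => i j; rewrite ord1 mxE; apply/eqP; rewrite -sqrf_eq0.
by apply: H; rewrite mem_index_enum.
Qed.
Lemma sqnorm20 : sqnorm2 (0 : 'cV[R]_n) = 0.
Proof. by rewrite /sqnorm2 big1 // => i _; rewrite mxE expr0n. Qed.
Lemma norm20 : norm2 (0 : 'cV[R]_n) = 0.
Proof. by rewrite /norm2 sqnorm20 sqrtr0. Qed.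

Lemma norm2_sum (F : 'I_n -> 'cV[R]_n) : norm2 (\sum_j F j) <= \sum_j norm2 (F j).
Proof.
elim/big_rec2: _ => [|j x y _ H]; first by rewrite norm20.
by apply: le_trans (norm2D _ _) _; rewrite lerD2l.
Qed.

Lemma mulmx_cols (B : 'M[R]_n) v : B *m v = \sum_j v j 0 *: col j B.
Proof.
apply/matrixP => i k; rewrite ord1 !mxE summxE; apply: eq_bigr => j _.
by rewrite !mxE mulrC.
Qed.

Lemma entry_le1 v j : norm2 v <= 1 -> `|v j 0| <= 1.
Proof.
move=> H; have h1 : sqnorm2 v <= 1.
  by rewrite -norm2_sq; have := norm2_ge0 v; nra.
have h2 : v j 0 ^+ 2 <= sqnorm2 v.
  rewrite /sqnorm2 (bigD1 j) //= lerDl; apply: sumr_ge0 => i _; exact: sqr_ge0.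
have h3 : `|v j 0| ^+ 2 = v j 0 ^+ 2 by rewrite real_normK // num_real.
have := normr_ge0 (v j 0); nra.
Qed.

Lemma opnorm_ub (B : 'M[R]_n) : has_ubound [set norm2 (B *m v) | v in [set v : 'cV[R]_n | norm2 v <= 1]].
Proof.
exists (\sum_j norm2 (col j B)) => _ [v /= hv <-].
rewrite mulmx_cols; apply: le_trans (norm2_sum _) _; apply: ler_sum => j _.
rewrite norm2Z; have := @entry_le1 v j hv; have := norm2_ge0 (col j B); nra.
Qed.

Lemma opnorm_bound (B : 'M[R]_n) v : norm2 (B *m v) <= opnorm B * norm2 v.
Proof.
have [v0|vn0] := eqVneq (sqnorm2 v) 0.
  by rewrite (@sqnorm2_eq0 v v0) mulmx0 norm20 mulr0.
have np : 0 < norm2 v.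
  by rewrite sqrtr_gt0 lt_neqAle eq_sym vn0 sqnorm2_ge0.
set w := (norm2 v)^-1 *: v.
have hw : norm2 w <= 1.
  by rewrite /w norm2Z ger0_norm; [rewrite mulVf ?gt_eqF | rewrite invr_ge0 ltW].
have := ub_le_sup (opnorm_ub B) (ex_intro2 _ _ w hw erefl).
rewrite -/(opnorm B) /w -scalemxAr norm2Z ger0_norm; last by rewrite invr_ge0 ltW.
move=> H.
have e : norm2 (B *m v) = ((norm2 v)^-1 * norm2 (B *m v)) * norm2 v.
  by rewrite mulrAC mulVf ?gt_eqF ?mul1r.
by rewrite {1}e ler_pM2r.
Qed.

Lemma opnorm_le (B : 'M[R]_n) c : 0 <= c ->
  (forall v, norm2 (B *m v) <= c * norm2 v) -> opnorm B <= c.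
Proof.
move=> c0 H; apply: ge_sup.
  by exists (norm2 (B *m 0)), 0 => //=; rewrite norm20.
move=> _ [v /= hv <-]; apply: le_trans (H v) _.
have := norm2_ge0 v; nra.
Qed.

Lemma tr_bound (B : 'M[R]_n) K : 0 <= K -> (forall v, norm2 (B *m v) <= K * norm2 v) ->
  forall w, norm2 (B^T *m w) <= K * norm2 w.
Proof.
move=> K0 H w; set s := norm2 (B^T *m w).
have e : s ^+ 2 = dotv w (B *m (B^T *m w)) by rewrite /s norm2_sq sqnorm2E [RHS]dotv_mulmx.
have := CS w (B *m (B^T *m w)); rewrite -e => h1.
have := H (B^T *m w); rewrite -/s => h2.
have s0 : 0 <= s := norm2_ge0 _.
have w0 := norm2_ge0 w.
have h3 : s ^+ 2 <= norm2 w * (K * s) by apply: le_trans h1 _; rewrite ler_wpM2l.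
have := mulr_ge0 K0 w0.
nra.
Qed.

Lemma frob_cols (B : 'M[R]_n) : \sum_(i < n) \sum_(j < n) B i j ^+ 2 = \sum_j sqnorm2 (col j B).
Proof. by rewrite exchange_big; apply: eq_bigr => j _; apply: eq_bigr => i _; rewrite mxE. Qed.

Lemma frobnorm_sq (B : 'M[R]_n) : frobnorm B ^+ 2 = \sum_j sqnorm2 (col j B).
Proof.
rewrite /frobnorm sqr_sqrtr -?frob_cols //.
by apply: sumr_ge0 => i _; apply: sumr_ge0 => j _; exact: sqr_ge0.
Qed.

Lemma frobnorm_ge0 (B : 'M[R]_n) : 0 <= frobnorm B.
Proof. exact: sqrtr_ge0. Qed.

Lemma tr_TB (B : 'M[R]_n) : \tr (B^T *m B) = frobnorm B ^+ 2.
Proof.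
rewrite frobnorm_sq /mxtrace; apply: eq_bigr => j _.
rewrite mxE /sqnorm2; apply: eq_bigr => i _; by rewrite !mxE expr2.
Qed.

Lemma col_mul' (X Y : 'M[R]_n) j : X *m col j Y = col j (X *m Y).
Proof. by apply/matrixP => i k; rewrite !mxE; apply: eq_bigr => l _; rewrite !mxE. Qed.

Definition Lm (B : 'M[R]_n) : 'M[R]_n := 2%:M - 2^-1 *: B^T.
Definition Qm (B : 'M[R]_n) : 'M[R]_n := Lm B *m B.
Definition Lv (B : 'M[R]_n) (u : 'cV[R]_n) : 'cV[R]_n := 2 *: u - B^T *m u.

Lemma LmE B (y : 'cV[R]_n) : Lm B *m y = 2 *: y - 2^-1 *: (B^T *m y).
Proof. by rewrite /Lm mulmxBl mul_scalar_mx -scalemxAl. Qed.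

Lemma Lm_bound B (y : 'cV[R]_n) : (forall v, norm2 (B^T *m v) <= 2 * norm2 v) ->
  norm2 (Lm B *m y) <= 3 * norm2 y.
Proof.
move=> H; rewrite LmE; apply: le_trans (norm2B _ _) _.
rewrite !norm2Z !ger0_norm ?invr_ge0 //; have := H y; lra.
Qed.

Lemma dotv_Qm B (xi : 'cV[R]_n) :
  dotv xi (Qm B *m xi) = 2 * dotv xi (B *m xi) - 2^-1 * sqnorm2 (B *m xi).
Proof.
by rewrite /Qm -(mulmxA (Lm B) B xi) LmE dotvBr !dotvZr [dotv xi (B^T *m _)]dotv_mulmx trmxK sqnorm2E.
Qed.

Lemma tr_Qm B : \tr (Qm B) = 2 * \tr B - 2^-1 * frobnorm B ^+ 2.
Proof.
rewrite /Qm /Lm mulmxBl mul_scalar_mx -scalemxAl -tr_TB.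
by rewrite linearB !linearZ.
Qed.

Lemma dotv_Lv B (u xi : 'cV[R]_n) : dotv xi (Lv B u) = 2 * dotv xi u - dotv (B *m xi) u.
Proof. by rewrite /Lv dotvBr dotvZr dotv_mulmx trmxK. Qed.

Lemma pair_bound (B : 'M[R]_n) (u xi : 'cV[R]_n) (sigma sb x' : R) :
  0 <= sigma -> 0 < sb -> 0 < x' ->
  (forall v, norm2 (B *m v) <= 2 * norm2 v) ->
  dotv xi (Lv B u) <= sb * norm2 (Lv B u) * Num.sqrt (2 * x') ->
  dotv xi (Qm B *m xi) - sigma ^+ 2 * \tr (Qm B) <=
    2 * sigma * sb * frobnorm (Qm B) * Num.sqrt x' + 2 * sb ^+ 2 * opnorm (Qm B) * x' ->
  2 * dotv xi (u + B *m xi) - 2 * sigma ^+ 2 * \tr B <=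
    2^-1 * sqnorm2 (u + B *m xi) + 46 * sb ^+ 2 * x'.
Proof.
move=> s0 sb0 x0 HB H1 H2.
have HT := @tr_bound B 2 (ler0n _ 2) HB.
have nL : norm2 (Lv B u) <= 4 * norm2 u.
  rewrite /Lv; apply: le_trans (norm2B _ _) _.
  rewrite norm2Z ger0_norm //; have := HT u; lra.
have oQ : opnorm (Qm B) <= 6.
  apply: opnorm_le => // v; rewrite /Qm -(mulmxA (Lm B) B v).
  apply: le_trans (@Lm_bound B (B *m v) HT) _; have := HB v; lra.
have fQ : frobnorm (Qm B) <= 3 * frobnorm B.
  rewrite -(ler_pXn2r (_ : (0 < 2)%N)) ?nnegrE ?frobnorm_ge0 ?mulr_ge0 ?frobnorm_ge0 //.
  rewrite exprMn !frobnorm_sq mulr_sumr; apply: ler_sum => j _.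
  rewrite /Qm -col_mul'; have := @Lm_bound B (col j B) HT.
  rewrite -!norm2_sq; have := norm2_ge0 (Lm B *m col j B); have := norm2_ge0 (col j B).
  nra.
move: H1 H2 nL oQ fQ; rewrite dotv_Lv dotv_Qm tr_Qm dotvDr sqnorm2D -(norm2_sq u).
rewrite sqrtrM ?ler0n //.
set r := Num.sqrt 2; set t := Num.sqrt x'.
have r0 : 0 <= r := sqrtr_ge0 _.
have t0 : 0 <= t := sqrtr_ge0 _.
have rr : r ^+ 2 = 2 by rewrite sqr_sqrtr ?ler0n.
have tt : t ^+ 2 = x' by rewrite sqr_sqrtr ?ltW.
rewrite (dotvC u).
set a := dotv xi u; set c := dotv xi (B *m xi); set e := dotv (B *m xi) u.
set p := sqnorm2 (B *m xi); set F := frobnorm B; set N := norm2 u.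
set nv := norm2 (Lv B u); set fq := frobnorm (Qm B); set oq := opnorm (Qm B).
move=> H1 H2 nL oQ fQ.
have N0 : 0 <= N := norm2_ge0 _.
have F0 : 0 <= F := frobnorm_ge0 _.
have nv0 : 0 <= nv := norm2_ge0 _.
have k1 : sb * nv * (r * t) <= 2^-1 * N ^+ 2 + 16 * sb ^+ 2 * x'.
  have : sb * nv * (r * t) <= sb * (4 * N) * (r * t).
    have sbp := ltW sb0.
    by apply: ler_wpM2r; rewrite ?mulr_ge0 //; apply: ler_wpM2l.
  rewrite -tt; have := sqr_ge0 (N - 4 * sb * r * t); nra.
have k2 : 2 * sigma * sb * fq * t <= 2^-1 * (sigma ^+ 2 * F ^+ 2) + 18 * sb ^+ 2 * x'.
  have : 2 * sigma * sb * fq * t <= 2 * sigma * sb * (3 * F) * t.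
    have sbp := ltW sb0.
    by apply: ler_wpM2r => //; apply: ler_wpM2l => //; rewrite !mulr_ge0.
  rewrite -tt; have := sqr_ge0 (sigma * F - 6 * sb * t); nra.
have k3 : 2 * sb ^+ 2 * oq * x' <= 12 * sb ^+ 2 * x'.
  have := ler_wpM2l (mulr_ge0 (sqr_ge0 sb) (ltW x0)) oQ; nra.
lra.
Qed.

End Vec.

Section Det.
Variable R : realType.

Lemma quad_lemma (P Qn D C c : R) :
  (forall t, 0 <= t <= 1 -> 2^-1 * P + C <=
     2^-1 * ((1 - t) ^+ 2 * P + 2 * t * (1 - t) * D + t ^+ 2 * Qn) + (1 - t) * C + t * c) ->
  0 <= Qn - 2 * D + P ->
  2^-1 * P + C + 2^-1 * (Qn - 2 * D + P) <= 2^-1 * Qn + c.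
Proof.
move=> H Dd0.
set a := c - C + D - P; set Dd := Qn - 2 * D + P.
have key : forall t, 0 <= t <= 1 -> 0 <= t * a + 2^-1 * t ^+ 2 * Dd.
  move=> t ht; have := H t ht; rewrite /a /Dd; lra.
suff : 0 <= a by rewrite /a /Dd; lra.
rewrite leNgt; apply/negP => a0.
have [hD|hD] := lerP (- a) Dd.
  have Dp : 0 < Dd by lra.
  set t := - a / Dd.
  have tD : t * Dd = - a by rewrite /t divfK // gt_eqF.
  have tp : 0 < t by rewrite /t divr_gt0 // oppr_gt0.
  have t1 : t <= 1 by rewrite /t ler_pdivrMr // mul1r.
  have := key t; rewrite ltW //= => /(_ t1) h.
  have e2 : 2^-1 * t ^+ 2 * Dd = 2^-1 * t * (t * Dd) by rewrite expr2; ring.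
  have e : t * a + 2^-1 * t ^+ 2 * Dd = t * (2^-1 * a) by rewrite e2 tD; field.
  move: h; rewrite e; nra.
have := key 1; rewrite ler01 lexx /= => h; lra.
Qed.

Variables (n M : nat).
Implicit Types (A : 'I_M -> 'M[R]_n) (b : 'I_M -> 'cV[R]_n) (y : 'cV[R]_n) (th : 'I_M -> R).

Lemma muhat_sum A b y th : muhat A b y th = \sum_k th k *: muhat_j A b y k.
Proof.
rewrite /muhat /Ath /bth mulmx_suml -big_split; apply: eq_bigr => k _.
by rewrite /muhat_j scalerDr scalemxAl.
Qed.

Lemma tr_Ath A th : \tr (Ath A th) = \sum_k th k * \tr (A k).
Proof. rewrite /Ath raddf_sum; apply: eq_bigr => k _ /=; exact: mxtraceZ. Qed.

Definition ck sigma A b y k : R :=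
  - 2 * dotv y (muhat_j A b y k) + 2 * sigma ^+ 2 * \tr (A k) + 2^-1 * sqnorm2 (muhat_j A b y k).

Lemma Hpen_formula sigma A b y th : \sum_k th k = 1 ->
  Hpen sigma A b y th = 2^-1 * sqnorm2 (muhat A b y th) + \sum_k th k * ck sigma A b y k.
Proof.
move=> s1.
set m := muhat A b y th.
have hm : m = \sum_k th k *: muhat_j A b y k by rewrite /m muhat_sum.
have e1 : dotv y m = \sum_k th k * dotv y (muhat_j A b y k).
  by rewrite hm dotv_sumr; apply: eq_bigr => k _; rewrite dotvZr.
have e2 : \sum_k th k * dotv m (muhat_j A b y k) = sqnorm2 m.
  rewrite sqnorm2E {3}hm dotv_sumr; apply: eq_bigr => k _; rewrite dotvZr.
  by [].
have e3 : pen A b y th = \sum_k th k * sqnorm2 m - 2 * (\sum_k th k * dotv m (muhat_j A b y k))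
      + \sum_k th k * sqnorm2 (muhat_j A b y k).
  rewrite /pen -/m mulr_sumr -sumrB -big_split /=; apply: eq_bigr => k _.
  rewrite sqnorm2B; ring.
rewrite e2 -mulr_suml s1 mul1r in e3.
rewrite /Hpen /Cp -/m e3 tr_Ath e1.
have -> : \sum_k th k * ck sigma A b y k =
   - 2 * (\sum_k th k * dotv y (muhat_j A b y k)) + 2 * sigma ^+ 2 * (\sum_k th k * \tr (A k))
   + 2^-1 * (\sum_k th k * sqnorm2 (muhat_j A b y k)).
  rewrite !mulr_sumr -!big_split /=; apply: eq_bigr => k _; rewrite /ck; ring.
lra.
Qed.

Lemma sum_aff2 th (X Y : 'I_M -> R) (al be c : R) : \sum_k th k = 1 ->
  \sum_k th k * (al * X k + be * Y k + c) = al * (\sum_k th k * X k) + be * (\sum_k th k * Y k) + c.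
Proof.
move=> s1.
transitivity (\sum_k (al * (th k * X k) + be * (th k * Y k) + c * th k)).
  by apply: eq_bigr => k _; ring.
by rewrite !big_split /= -!mulr_sumr s1 mulr1.
Qed.

Lemma line_sum_v th (F : 'I_M -> 'cV[R]_n) t j :
  \sum_k ((1 - t) * th k + t * (k == j)%:R) *: F k = (1 - t) *: (\sum_k th k *: F k) + t *: F j.
Proof.
under eq_bigr do rewrite scalerDl.
rewrite big_split /= scaler_sumr; congr (_ + _).
  by apply: eq_bigr => k _; rewrite scalerA.
rewrite (bigD1 j) //= eqxx mulr1 big1 ?addr0 // => k kj.
by rewrite (negbTE kj) mulr0 scale0r.
Qed.

Lemma line_sum_r th (F : 'I_M -> R) t j :
  \sum_k ((1 - t) * th k + t * (k == j)%:R) * F k = (1 - t) * (\sum_k th k * F k) + t * F j.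
Proof.
under eq_bigr do rewrite mulrDl.
rewrite big_split /= mulr_sumr; congr (_ + _).
  by apply: eq_bigr => k _; rewrite mulrA.
rewrite (bigD1 j) //= eqxx mulr1 big1 ?addr0 // => k kj.
by rewrite (negbTE kj) mulr0 mul0r.
Qed.

Lemma opt_consequence sigma A b y th j : simplex M th ->
  (forall t, simplex M t -> Hpen sigma A b y th <= Hpen sigma A b y t) ->
  2^-1 * sqnorm2 (muhat A b y th) + \sum_k th k * ck sigma A b y k
    + 2^-1 * sqnorm2 (muhat_j A b y j - muhat A b y th)
  <= 2^-1 * sqnorm2 (muhat_j A b y j) + ck sigma A b y j.
Proof.
move=> [s1 s0] Hmin.
set p := muhat A b y th; set q := muhat_j A b y j.
rewrite sqnorm2B (dotvC q p).
apply: quad_lemma; last by rewrite (dotvC p q) -sqnorm2B sqnorm2_ge0.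
move=> t /andP[t0 t1].
set tht := fun k => (1 - t) * th k + t * (k == j)%:R.
have st : simplex M tht.
  split.
    have := line_sum_r th (fun _ => 1) t j; rewrite /tht.
    under eq_bigr do rewrite mulr1.
    under [X in _ = (1 - t) * X + _]eq_bigr do rewrite mulr1.
    by move=> ->; rewrite s1; ring.
  move=> k; rewrite /tht; apply: addr_ge0; apply: mulr_ge0 => //.
  by rewrite subr_ge0.
have := Hmin _ st.
rewrite !Hpen_formula //; last by case: st.
rewrite -/p muhat_sum /tht line_sum_v line_sum_r -muhat_sum -/p -/q.
rewrite [sqnorm2 ((1 - t) *: p + _)]sqnorm2D !sqnorm2Z dotvZl dotvZr.
move=> h; lra.
Qed.

Lemma det_main sigma A b (f xi : 'cV[R]_n) th (K : R) :
  simplex M th ->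
  (forall t, simplex M t -> Hpen sigma A b (f + xi) th <= Hpen sigma A b (f + xi) t) ->
  (forall k j, 2 * dotv xi (muhat_j A b (f + xi) k - muhat_j A b (f + xi) j)
       - 2 * sigma ^+ 2 * (\tr (A k) - \tr (A j))
     <= 2^-1 * sqnorm2 (muhat_j A b (f + xi) k - muhat_j A b (f + xi) j) + K) ->
  forall j, sqnorm2 (muhat A b (f + xi) th - f) <= sqnorm2 (muhat_j A b (f + xi) j - f) + K.
Proof.
move=> sth Hmin Hev j.
have := opt_consequence j sth Hmin.
case: sth => [s1 s0].
set y := f + xi.
set mh := muhat A b y th.
set mu := muhat_j A b y.
have hm : mh = \sum_k th k *: mu k by rewrite /mh muhat_sum.
have Hs : \sum_k th k * (2 * dotv xi (mu k - mu j) - 2 * sigma ^+ 2 * (\tr (A k) - \tr (A j)))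
   <= \sum_k th k * (2^-1 * sqnorm2 (mu k - mu j) + K).
  by apply: ler_sum => k _; apply: ler_wpM2l => //; exact: Hev.
have dl : forall v, dotv v mh = \sum_k th k * dotv v (mu k).
  by move=> v; rewrite hm dotv_sumr; apply: eq_bigr => k _; rewrite dotvZr.
have E1 : \sum_k th k * (2 * dotv xi (mu k - mu j) - 2 * sigma ^+ 2 * (\tr (A k) - \tr (A j)))
  = 2 * dotv xi mh - 2 * dotv xi (mu j) - 2 * sigma ^+ 2 * (\sum_k th k * \tr (A k))
    + 2 * sigma ^+ 2 * \tr (A j).
  rewrite dl.
  rewrite (eq_bigr (fun k => th k * (2 * dotv xi (mu k) + (- 2 * sigma ^+ 2) * \tr (A k)
         + (- 2 * dotv xi (mu j) + 2 * sigma ^+ 2 * \tr (A j))))); last first.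
    by move=> k _; rewrite dotvBr; ring.
  rewrite sum_aff2 //; ring.
have E2 : \sum_k th k * (2^-1 * sqnorm2 (mu k - mu j) + K)
  = 2^-1 * (\sum_k th k * sqnorm2 (mu k)) - dotv mh (mu j) + 2^-1 * sqnorm2 (mu j) + K.
  rewrite dotvC dl.
  rewrite (eq_bigr (fun k => th k * (2^-1 * sqnorm2 (mu k) + (-1) * dotv (mu j) (mu k)
         + (2^-1 * sqnorm2 (mu j) + K)))); last first.
    by move=> k _; rewrite sqnorm2B (dotvC (mu k)); field.
  rewrite sum_aff2 //; ring.
rewrite E1 E2 in Hs.
have Hc : \sum_k th k * ck sigma A b y k =
   - 2 * dotv y mh + 2 * sigma ^+ 2 * (\sum_k th k * \tr (A k))
   + 2^-1 * (\sum_k th k * sqnorm2 (mu k)).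
  rewrite dl !mulr_sumr -!big_split /=; apply: eq_bigr => k _; rewrite /ck; ring.
rewrite Hc /ck -/mu.
rewrite !sqnorm2B /y !(dotvDl _ f xi).
move: Hs; set T := \sum_k th k * \tr (A k); set S := \sum_k th k * sqnorm2 (mu k).
rewrite (dotvC (mu j) mh) (dotvC mh f) (dotvC (mu j) f).
lra.
Qed.

End Det.

Section Prob.
Variables (d : measure_display) (T : measurableType d) (R : realType).

Lemma meas_gt (g : T -> R) (c : R) : measurable_fun setT g -> measurable [set w | c < g w].
Proof.
move=> mg; have := mg measurableT _ (measurable_itv `]c, +oo[).
rewrite setTI; congr measurable; apply/seteqP; split => w /=; by rewrite in_itv /= andbT.
Qed.

Lemma meas_dot n (X : 'I_n -> T -> R) (v : 'cV[R]_n) : (forall i, measurable_fun setT (X i)) ->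
  measurable_fun setT (fun w => dotv (colv X w) v).
Proof.
move=> mX; rewrite /dotv; apply: measurable_sum => i.
rewrite (_ : (fun w => _) = (fun w => X i w * v i 0)); last first.
  by apply/funext => w; rewrite mxE.
by apply: measurable_funM => //; exact: measurable_cst.
Qed.

Lemma meas_quad n (X : 'I_n -> T -> R) (Q : 'M[R]_n) : (forall i, measurable_fun setT (X i)) ->
  measurable_fun setT (fun w => dotv (colv X w) (Q *m colv X w)).
Proof.
move=> mX; rewrite /dotv; apply: measurable_sum => i.
rewrite (_ : (fun w => _) = (fun w => X i w * \sum_j Q i j * X j w)); last first.
  apply/funext => w; rewrite !mxE; congr (_ * _); apply: eq_bigr => j _; by rewrite mxE.
apply: measurable_funM => //; apply: measurable_sum => j.
by apply: measurable_funM => //; exact: measurable_cst.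
Qed.

Lemma in_bigU m (F : 'I_m -> set T) i w : F i w -> (\big[setU/set0]_(k < m) F k) w.
Proof. by move=> h; rewrite (bigD1 i) //=; left. Qed.

Lemma mu_bigU (P : probability T R) m (F : 'I_m -> set T) : (forall i, measurable (F i)) ->
  measurable (\big[setU/set0]_(i < m) F i) /\
  (P (\big[setU/set0]_(i < m) F i) <= \sum_(i < m) P (F i))%E.
Proof.
move=> mF; elim/big_rec2: _ => [|i X Y _ [mX h]]; first by rewrite measure0.
split; first exact: measurableU.
apply: le_trans (measureU2 _ (mF i) mX) _.
by rewrite leeD2l.
Qed.

End Prob.

Unset Implicit Arguments.

Theorem theorem6p1 (R : realType) (d : measure_display) (T : measurableType d)
  (P : probability T R) (n M : nat) (sigma sigmabar : R)
  (xi : 'I_n -> {RV P >-> R}) (f : 'cV[R]_n)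
  (A : 'I_M -> 'M[R]_n) (b : 'I_M -> 'cV[R]_n)
  (thetahat : T -> ('I_M -> R)) :
  (2 <= M)%N -> 0 < sigmabar -> 0 <= sigma ->
  (* xi_1, ..., xi_n i.i.d., centered, with variance sigma^2 *)
  mutually_independent P (fun i => xi i : T -> R) ->
  identically_distributed P (fun i => xi i : T -> R) ->
  (forall i, P.-integrable setT (EFin \o xi i)) ->
  (forall i, ('E_P[xi i] = 0)%E) ->
  (forall i, ('V_P[xi i] = (sigma ^+ 2)%:E)%E) ->
  (* linear concentration *)
  (forall (v : 'cV[R]_n) (x : R), 0 < x ->
     (P [set w | (dotv (colv (fun i => xi i : T -> R) w) v > sigmabar * norm2 v * Num.sqrt (2 * x))%R]
       <= (expR (- x))%:E)%E) ->
  (* quadratic concentration *)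
  (forall (B : 'M[R]_n) (x : R), 0 < x ->
     (P [set w | (dotv (colv (fun i => xi i : T -> R) w) (B *m colv (fun i => xi i : T -> R) w)
                  - sigma ^+ 2 * \tr B
                > 2 * sigma * sigmabar * frobnorm B * Num.sqrt x + 2 * sigmabar ^+ 2 * opnorm B * x)%R]
       <= (expR (- x))%:E)%E) ->
  (forall j, opnorm (A j) <= 1) ->
  (* thetahat(omega) is a minimiser of H_pen over the simplex, with y = f + xi(omega) *)
  (forall w, simplex M (thetahat w) /\
     forall th, simplex M th ->
       Hpen sigma A b (f + colv (fun i => xi i : T -> R) w) (thetahat w)
         <= Hpen sigma A b (f + colv (fun i => xi i : T -> R) w) th) ->
  forall x : R, 0 < x ->
    exists E : set T, measurable E /\ ((1 - 2 * expR (- x))%:E <= P E)%E /\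
      forall w, E w ->
        forall j : 'I_M,
          sqnorm2 (muhat A b (f + colv (fun i => xi i : T -> R) w) (thetahat w) - f)
            <= sqnorm2 (muhat_j A b (f + colv (fun i => xi i : T -> R) w) j - f)
               + 46 * sigmabar ^+ 2 * (2 * ln (M%:R : R) + x).
Proof.
move=> M2 sb0 s0 _ _ _ _ _ Hlin Hquad HA Hmin x x0.
set X := colv (fun i => xi i : T -> R).
have mX : forall i, measurable_fun setT (fun w => (xi i : T -> R) w) by move=> i.
have Mpos : 0 < (M%:R : R) by rewrite ltr0n; exact: ltnW M2.
have lnM : 0 <= ln (M%:R : R) by rewrite ln_ge0 // ler1n; exact: ltnW M2.
set x' := x + 2 * ln (M%:R : R).
have x'0 : 0 < x' by rewrite /x'; lra.
pose B k j := A k - A j.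
pose u k j := B k j *m f + (b k - b j).
pose Lb k j := [set w | sigmabar * norm2 (Lv (B k j) (u k j)) * Num.sqrt (2 * x')
                         < dotv (X w) (Lv (B k j) (u k j))].
pose Qb k j := [set w | 2 * sigma * sigmabar * frobnorm (Qm (B k j)) * Num.sqrt x'
                         + 2 * sigmabar ^+ 2 * opnorm (Qm (B k j)) * x'
                       < dotv (X w) (Qm (B k j) *m X w) - sigma ^+ 2 * \tr (Qm (B k j))].
have mL : forall k j, measurable (Lb k j).
  by move=> k j; apply: meas_gt; exact: meas_dot.
have mQ : forall k j, measurable (Qb k j).
  move=> k j; apply: meas_gt; apply: measurable_funB; last exact: measurable_cst.
  exact: meas_quad.
pose U := \big[setU/set0]_(k < M) \big[setU/set0]_(j < M) (Lb k j `|` Qb k j).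
have mLQ : forall k j, measurable (Lb k j `|` Qb k j).
  by move=> k j; apply: measurableU.
have mU1 : forall k, measurable (\big[setU/set0]_(j < M) (Lb k j `|` Qb k j)).
  by move=> k; case: (mu_bigU P (mLQ k)).
have [mU PU] := mu_bigU P mU1.
exists (~` U); split; first exact: measurableC.
split.
  rewrite probability_setC //.
  set e := expR (- x').
  have PLQ : forall k j, (P (Lb k j `|` Qb k j) <= (e + e)%:E)%E.
    move=> k j; apply: le_trans (measureU2 _ (mL k j) (mQ k j)) _.
    rewrite EFinD; apply: leeD.
      exact: (Hlin (Lv (B k j) (u k j)) x' x'0).
    exact: (Hquad (Qm (B k j)) x' x'0).
  have Pk : forall k, (P (\big[setU/set0]_(j < M) (Lb k j `|` Qb k j)) <= ((e + e) *+ M)%:E)%E.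
    move=> k; have [_ h] := mu_bigU P (mLQ k); apply: le_trans h _.
    rewrite (_ : ((e + e) *+ M)%:E = \sum_(j < M) (e + e)%:E)%E; last first.
      by rewrite sumEFin sumr_const card_ord.
    by apply: lee_sum => j _; exact: PLQ.
  have PU2 : (P U <= ((e + e) *+ M *+ M)%:E)%E.
    apply: le_trans PU _.
    rewrite (_ : ((e + e) *+ M *+ M)%:E = \sum_(k < M) ((e + e) *+ M)%:E)%E; last first.
      by rewrite sumEFin sumr_const card_ord.
    by apply: lee_sum => k _; exact: Pk.
  have ee : (e + e) *+ M *+ M = 2 * expR (- x).
    rewrite /e /x' opprD expRD -mulrN (expRM_natl 2) (expRN (ln _)) lnK; last by rewrite posrE.
    rewrite -[LHS]mulr_natr -[(_ *+ M)]mulr_natr; field; by rewrite gt_eqF.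
  rewrite ee in PU2.
  have fU : P U \is a fin_num by rewrite fin_num_measure.
  rewrite -(fineK fU) -EFinB lee_fin.
  move: PU2; rewrite -(fineK fU) lee_fin; lra.
move=> w /= nU j.
have := Hmin w; case=> sth Hm.
rewrite (_ : 46 * sigmabar ^+ 2 * (2 * ln (M%:R : R) + x) = 46 * sigmabar ^+ 2 * x'); last first.
  by rewrite /x' addrC.
apply: (det_main sth Hm) => k j0.
have nL : ~ Lb k j0 w.
  by move=> h; apply: nU; rewrite /U; apply: (in_bigU (i:=k)); apply: (in_bigU (i:=j0)); left.
have nQ : ~ Qb k j0 w.
  by move=> h; apply: nU; rewrite /U; apply: (in_bigU (i:=k)); apply: (in_bigU (i:=j0)); right.
have e1 : muhat_j A b (f + X w) k - muhat_j A b (f + X w) j0 = u k j0 + B k j0 *m X w.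
  rewrite /muhat_j /u /B !mulmxBl !mulmxDr; apply/matrixP => i l; rewrite !mxE; ring.
have e2 : \tr (A k) - \tr (A j0) = \tr (B k j0) by rewrite /B linearB.
rewrite e1 e2.
apply: pair_bound => //.
- move=> v; rewrite /B mulmxBl; apply: le_trans (norm2B _ _) _.
  have h1 := opnorm_bound (A k) v; have h2 := opnorm_bound (A j0) v.
  have := HA k; have := HA j0; have := norm2_ge0 v. nra.
- by rewrite leNgt; apply/negP.
- by rewrite leNgt; apply/negP.
Qed.
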